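(* Let $I\subseteq R$ be a good ideal. Then there exist finitely many pairwise disjoint cones in $\mathbb N^n$ whose union is $\mathbb N^n$ such that for each of these cones $C$ and all $a,b\in C$ one has $I_a=I_b$.
   Context: Let $\mathbb K$ be a field, $R=\mathbb K[x_1,\dots,x_n]$, $\mathfrak m=\langle x_1,\dots,x_n\rangle$, $\mathbb N=\{0,1,2,\dots\}$. A monomial $x_1^{\alpha_1}\cdots x_n^{\alpha_n}$ is identified with the point $(\alpha_1,\dots,\alpha_n)\in\mathbb N^n$. For a monomial ideal $I$, $G(I)$ denotes its (unique) minimal monomial generating set. If $I$ is an $\mathfrak m$-primary monomial ideal, then for each $i$ there is a unique $d_i\ge1$ with $x_i^{d_i}\in G(I)$; write $\mu_i=x_i^{d_i}$. For $(a_1,\dots,a_n)\in\mathbb N^n$ the box associated to $I$ is $B_{a_1,\dots,a_n}=([a_1d_1,(a_1+1)d_1]\times\cdots\times[a_nd_n,(a_n+1)d_n])\cap\mathbb N^n$; a monomial belongs to a box if its exponent vector does. An $\mathfrak m$-primary monomial ideal $I$ is called good if for every integer $l\ge1$, every element of $G(I^l)$ belongs to some box $B_{a_1,\dots,a_n}$ with $a_1+\dots+a_n=l-1$. For a good ideal $I$ and $a=(a_1,\dots,a_n)\in\mathbb N^n$, with $l=a_1+\dots+a_n+1$, define $I_{a}=I_{a_1,\dots,a_n}=\left\langle \frac{m}{\mu_1^{a_1}\cdots\mu_n^{a_n}} : m\in B_{a_1,\dots,a_n}\cap G(I^l)\right\rangle$. For $v\in\mathbb N^n$ and $S\subseteq\{1,\dots,n\}$,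 the cone with vertex $v$ and set of fixed coordinates $S$ is $\{c\in\mathbb N^n : c_i=v_i \text{ for } i\in S,\ c_i\ge v_i \text{ for } i\notin S\}$; its dimension is $n-|S|$. *)

(* Defs.v *)
(* Monomial ideals of K[x_1..x_n] are represented by their
   sets of exponent vectors (up-closed subsets of N^n). *)
From mathcomp Require Import all_boot.
Set Implicit Arguments. Unset Strict Implicit. Unset Printing Implicit Defensive.

Definition expv (n : nat) := 'I_n -> nat.

(* componentwise order = divisibility of monomials *)
Definition leV n (a b : expv n) : Prop := forall i, a i <= b i.

Definition zeroV n : expv n := fun _ => 0.

(* exponent vector of x_i^d *)
Definition powV n (i : 'I_n) (d : nat) : expv n := fun j => if j == i then d else 0.

Definition is_monideal n (I : expv n -> Prop) : Prop :=
  forall a b, I a -> leV a b -> I b.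

(* monomial set of the product ideal I^l (I^0 = R) *)
Fixpoint powI n (I : expv n -> Prop) (l : nat) : expv n -> Prop :=
  match l with
  | 0 => fun _ => True
  | l'.+1 => fun b => exists x y, I x /\ powI I l' y /\ leV (fun i => x i + y i) b
  end.

(* m belongs to G(I), the minimal monomial generating set *)
Definition mingen n (I : expv n -> Prop) (m : expv n) : Prop :=
  I m /\ forall b, I b -> leV b m -> leV m b.

Definition m_primary {n} (I : expv n -> Prop) : Prop :=
  is_monideal I /\ ~ I (@zeroV n) /\ forall i : 'I_n, exists d, I (powV i d).

(* d i is the exponent with x_i^{d_i} in G(I), d_i >= 1 *)
Definition gen_exponents n (I : expv n -> Prop) (d : expv n) : Prop :=
  forall i : 'I_n, 0 < d i /\ mingen I (powV i (d i)).

Definition inbox n (d a m : expv n) : Prop :=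
  forall i, a i * d i <= m i <= (a i).+1 * d i.

Definition sumV n (a : expv n) : nat := \sum_(i < n) a i.

Definition good n (I : expv n -> Prop) (d : expv n) : Prop :=
  m_primary I /\ gen_exponents I d /\
  forall l, 0 < l -> forall m, mingen (powI I l) m ->
    exists a : expv n, sumV a = l.-1 /\ inbox d a m.

(* monomial set of I_a: ideal generated by m / mu^a, m in B_a ∩ G(I^l) *)
Definition Ia n (I : expv n -> Prop) (d a : expv n) : expv n -> Prop :=
  fun c => exists m, inbox d a m /\ mingen (powI I (sumV a).+1) m /\
                     leV (fun i => m i - a i * d i) c.

(* cone with vertex v and set of fixed coordinates S *)
Definition cone n (v : expv n) (S : {set 'I_n}) (c : expv n) : Prop :=
  forall i, (i \in S -> c i = v i) /\ (i \notin S -> v i <= c i).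

(* Main.v *)
Require Import Defs.
From mathcomp Require Import all_boot zify.
From Stdlib Require Import Classical FunctionalExtensionality.
Set Implicit Arguments. Unset Strict Implicit. Unset Printing Implicit Defensive.

Section Basic.
Variable n : nat.
Implicit Types a b x y z m t : expv n.

Lemma sum_le (f g : 'I_n -> nat) : (forall i, f i <= g i) -> \sum_i f i <= \sum_i g i.
Proof. by move=> H; apply: leq_sum => i _. Qed.

Lemma sum_lt (f g : 'I_n -> nat) k : (forall i, f i <= g i) -> f k < g k ->
  \sum_i f i < \sum_i g i.
Proof.
move=> H Hk; rewrite (bigD1 k) //= [X in _ < X](bigD1 k) //=.
rewrite -addSn; apply: leq_add => //; apply: leq_sum => i _; exact: H.

Qed.

Lemma leV_refl x : leV x x. Proof. by move=> i. Qed.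
Lemma leV_trans x y z : leV x y -> leV y z -> leV x z.
Proof. by move=> H1 H2 i; apply: leq_trans (H1 i) (H2 i). Qed.
Lemma leV_anti x y : leV x y -> leV y x -> x = y.
Proof. move=> H1 H2; apply: functional_extensionality => i; apply/eqP; rewrite eqn_leq H1 H2 //. Qed.

Lemma exists_min (Q : expv n -> Prop) x : Q x -> exists m, mingen Q m /\ leV m x.
Proof.
move: {2}(sumV x) (leqnn (sumV x)) => N; elim: N x => [|N IH] x Hs Qx.
  exists x; split; last exact: leV_refl.
  split=> // b Qb Hb i.
  have Hx0 : forall j, x j = 0.
    move=> j; apply/eqP; rewrite -leqn0; apply: leq_trans Hs.
    by rewrite /sumV (bigD1 j) //= leq_addr.
  by rewrite Hx0.
case: (classic (forall b, Q b -> leV b x -> leV x b)) => [H|].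
  by exists x; split => //; exact: leV_refl.
move=> /not_all_ex_not [b Hb].
have [Qb Hb2] := imply_to_and _ _ Hb.
have [Hbx Hxb] := imply_to_and _ _ Hb2.
have [i Hi] : exists i, b i < x i.
  apply: NNPP => H; apply: Hxb => i; rewrite leqNgt; apply/negP => Hl; apply: H; by exists i.
have Hlt : sumV b < sumV x by apply: (sum_lt Hbx Hi).
have [m [Hm Hmb]] := IH b ltac:(lia) Qb.
by exists m; split => //; apply: leV_trans Hmb Hbx.
Qed.

End Basic.

Section Weights.
Variable n : nat.
Variable I : expv n -> Prop.
Variable d : expv n.
Hypothesis dpos : forall i, 0 < d i.
Hypothesis Imu : forall i, I (powV i (d i)).

Definition addV (x y : expv n) : expv n := fun i => x i + y i.
Definition scaleV (N : nat) (g : expv n) : expv n := fun i => N * g i.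
Definition muV (b : expv n) : expv n := fun i => b i * d i.
Definition eV (p : 'I_n) : expv n := fun j => nat_of_bool (j == p).
Definition wt (i : 'I_n) := \prod_(j < n | j != i) d j.
Definition DD := \prod_(j < n) d j.
Definition W (y : expv n) := \sum_i y i * wt i.

Lemma powI_add L x y : I x -> powI I L y -> powI I L.+1 (addV x y).
Proof. move=> Hx Hy; exists x, y; split => //; split => //; exact: leV_refl. Qed.

Lemma powI_up L y y' : powI I L y -> leV y y' -> powI I L y'.
Proof.
case: L => [//|L] [x [z [Hx [Hz H]]]] H'.
exists x, z; split => //; split => //; exact: leV_trans H H'.
Qed.

Lemma powI_scale N g : I g -> powI I N (scaleV N g).
Proof.
move=> Hg; elim: N => [//|N IH].
exists g, (scaleV N g); split => //; split => // i; rewrite /scaleV mulSn //.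
Qed.

Lemma sumV_addE (a : expv n) p : sumV (addV a (eV p)) = (sumV a).+1.
Proof.
rewrite /sumV /addV big_split /=.
have -> : \sum_(i < n) eV p i = 1.
  rewrite (bigD1 p) //= /eV eqxx big1 // => j Hj.
  by rewrite (negbTE Hj).
by rewrite addn1.
Qed.

Lemma powI_mu N (b : expv n) : sumV b = N -> powI I N (muV b).
Proof.
elim: N b => [//|N IH] b Hb.
have [p Hp] : exists p, 0 < b p.
  apply: NNPP => H.
  have H0 : forall j, b j = 0.
    move=> j; apply/eqP; rewrite -leqn0 leqNgt; apply/negP => Hj; apply: H; by exists j.
  move: Hb; rewrite /sumV big1 //.
pose b' : expv n := fun j => b j - (j == p).
have Hbb : b = addV b' (eV p).
  apply: functional_extensionality => j; rewrite /addV /b' /eV.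
  case: (eqVneq j p) => [->|_] /=; lia.
have Hs : sumV b' = N by move: Hb; rewrite Hbb sumV_addE => -[].
exists (powV p (d p)), (muV b'); split => //; split; first exact: IH.
move=> j; rewrite /powV /muV /b'; case: (eqVneq j p) => [->|_] /=; nia.
Qed.

Lemma W_add x y : W (addV x y) = W x + W y.
Proof. by rewrite /W /addV -big_split /=; apply: eq_bigr => i _; rewrite mulnDl. Qed.

Lemma W_le x y : leV x y -> W x <= W y.
Proof. move=> H; apply: sum_le => i; rewrite leq_mul2r H orbT //. Qed.

Lemma wt_pos k : 0 < wt k.
Proof. exact: prodn_gt0. Qed.

Lemma W_lt x y k : leV x y -> x k < y k -> W x < W y.
Proof.
move=> H Hk; apply: (sum_lt (k := k)) => [i|]; first by rewrite leq_mul2r H orbT.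
by rewrite ltn_pmul2r // wt_pos.
Qed.

Lemma d_wt i : d i * wt i = DD.
Proof. by rewrite /DD (bigD1 i) //=. Qed.

Lemma W_mu b : W (muV b) = DD * sumV b.
Proof.
rewrite /W /muV /sumV big_distrr /=; apply: eq_bigr => i _.
by rewrite -mulnA d_wt mulnC.
Qed.

Lemma W_scale N g : W (scaleV N g) = N * W g.
Proof. rewrite /W /scaleV big_distrr /=; apply: eq_bigr => i _; by rewrite mulnA. Qed.

Hypothesis goodI : forall l, 0 < l -> forall m, mingen (powI I l) m ->
    exists a : expv n, sumV a = l.-1 /\ inbox d a m.

Lemma gen_weight g : I g -> DD <= W g.
Proof.
move=> Hg.
have [z [Hmin Hzle]] := exists_min (powI_scale DD.+1 Hg).
have [a [Ha Hbox]] := goodI (ltn0Sn DD) Hmin.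
have H1 : leV (muV a) z by move=> i; case/andP: (Hbox i).
have := W_le (leV_trans H1 Hzle); rewrite W_mu W_scale Ha /=.
nia.
Qed.

Lemma powI_weight L y : powI I L y -> L * DD <= W y.
Proof.
elim: L y => [//|L IH] y [x [z [Hx [Hz H]]]].
have := W_le H; rewrite W_add.
have := gen_weight Hx; have := IH _ Hz.
rewrite mulSn; lia.
Qed.

End Weights.

Section Step.
Variable n : nat.
Variable I : expv n -> Prop.
Variable d : expv n.
Hypothesis dpos : forall i, 0 < d i.
Hypothesis Imu : forall i, I (powV i (d i)).
Hypothesis goodI : forall l, 0 < l -> forall m, mingen (powI I l) m ->
    exists a : expv n, sumV a = l.-1 /\ inbox d a m.

Lemma Ia_step a t i : Ia I d a t -> Ia I d (addV a (eV i)) t.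
Proof.
case=> m [Hbm [Hmin Hmt]].
set c := addV a (eV i).
have Hsc : sumV c = (sumV a).+1 := sumV_addE a i.
pose x := addV (powV i (d i)) m.
have Hx : powI I (sumV a).+2 x := powI_add (Imu i) Hmin.1.
have [z [Hz Hzx]] := exists_min Hx.
have [b [Hb Hbz]] := goodI (ltn0Sn _) Hz.
rewrite /= in Hb.
have Hlow : forall q, c q * d q <= z q.
  apply: NNPP => /not_all_ex_not [k Hk].
  move/negP: Hk; rewrite -ltnNge => Hk.
  have Hbk : b k < c k.
    rewrite ltnNge; apply/negP => Hle.
    have := leq_mul Hle (leqnn (d k)); case/andP: (Hbz k); lia.
  have [p Hp] : exists p, c p < b p.
    apply: NNPP => H.
    have Hle : forall q, b q <= c q.
      by move=> q; rewrite leqNgt; apply/negP => Hq; apply: H; exists q.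
    have := sum_lt Hle Hbk; rewrite -/(sumV b) -/(sumV c) Hb Hsc; lia.
  have Hzp : (c p).+1 * d p <= z p.
    case/andP: (Hbz p) => H1 _; apply: leq_trans H1; by rewrite leq_mul2r Hp orbT.
  have Hxp := Hzx p.
  have Hmp : (a p).+1 * d p <= m p.
    move: Hzp Hxp; rewrite /c /x /addV /eV /powV; case: (eqVneq p i) => [->|Hpi] /=; nia.
  have Hge : leV (muV d (addV a (eV p))) m.
    move=> q; rewrite /muV /addV /eV; case: (eqVneq q p) => [->|Hq] /=.
      by rewrite addn1.
    by rewrite addn0; case/andP: (Hbm q).
  have Hpow : powI I (sumV a).+1 (muV d (addV a (eV p))) := powI_mu Imu (sumV_addE a p).
  have Hmle := Hmin.2 _ Hpow Hge.
  pose X := muV d (addV c (eV p)).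
  have HzX : leV z X.
    move=> q; apply: leq_trans (Hzx q) _; have := Hmle q.
    rewrite /x /X /c /muV /addV /eV /powV.
    case: (eqVneq q i) => [->|_]; case: eqVneq => _ /=; nia.
  have HkX : z k < X k.
    apply: leq_trans Hk _; rewrite /X /muV /addV leq_mul2r leq_addr orbT //.
  have := W_lt dpos HzX HkX; rewrite W_mu sumV_addE Hsc.
  have := powI_weight goodI Hz.1.
  rewrite mulnC; lia.
exists z; split; last split.
- move=> q; rewrite Hlow /=; apply: leq_trans (Hzx q) _.
  case/andP: (Hbm q) => _ H; move: H; rewrite /x /c /addV /powV /eV.
  case: (eqVneq q i) => [->|_] /=; nia.
- by rewrite Hsc.
- move=> q; apply: leq_trans _ (Hmt q); have := Hzx q; have := Hlow q.
  case/andP: (Hbm q); rewrite /x /c /addV /powV /eV.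
  case: (eqVneq q i) => [->|_] /=; nia.
Qed.

End Step.

Section Stab.

Definition upd (a : nat -> nat) (k v : nat) : nat -> nat := fun j => if j == k then v else a j.
Definition clamp (a : nat -> nat) (M : nat) : nat -> nat := fun j => minn (a j) M.
Definition leF (a b : nat -> nat) := forall j, a j <= b j.

Lemma upd_conds n M b v : (forall j, j < n -> b j <= M) -> (forall j, n <= j -> b j = 0) ->
  v <= M -> (forall j, j < n.+1 -> upd b n v j <= M) /\ (forall j, n.+1 <= j -> upd b n v j = 0).
Proof.
move=> H1 H2 Hv; split => j Hj; rewrite /upd; case: eqP => Hjn.
- by rewrite Hjn in Hj *.
- apply: H1; lia.
- lia.
- apply: H2; lia.
Qed.

Lemma FM n M (H : (nat -> nat) -> nat -> Prop) :
  (forall b, (forall j, j < n -> b j <= M) -> (forall j, n <= j -> b j = 0) -> exists k, H b k) ->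
  exists K, forall b, (forall j, j < n -> b j <= M) -> (forall j, n <= j -> b j = 0) ->
    exists k, k <= K /\ H b k.
Proof.
elim: n H => [|n IH] H Hex.
  have [k0 Hk0] := Hex (fun _ => 0) (fun j (hj : j < 0) => ltac:(lia)) (fun _ _ => erefl).
  exists k0 => b _ Hb.
  have -> : b = (fun _ => 0) by apply: functional_extensionality => j; apply: Hb.
  by exists k0.
have Hv : forall V, exists K, forall v, v <= V -> v <= M -> forall b,
    (forall j, j < n -> b j <= M) -> (forall j, n <= j -> b j = 0) ->
    exists k, k <= K /\ H (upd b n v) k.
  elim => [|V [K1 HK1]].
    have := IH (fun b k => H (upd b n 0) k).
    case.
      move=> b Hb1 Hb2; have [C1 C2] := upd_conds Hb1 Hb2 (leq0n M); exact: Hex C1 C2.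
    move=> K HK; exists K => v Hv0 _ b Hb1 Hb2.
    have -> : v = 0 by lia.
    exact: HK.
  case: (leqP V.+1 M) => HVM.
    have := IH (fun b k => H (upd b n V.+1) k).
    case.
      move=> b Hb1 Hb2; have [C1 C2] := upd_conds Hb1 Hb2 HVM; exact: Hex C1 C2.
    move=> K2 HK2; exists (maxn K1 K2) => v Hv1 Hv2 b Hb1 Hb2.
    case: (leqP v V) => HvV.
      have [k [Hk Hk2]] := HK1 v HvV Hv2 b Hb1 Hb2; exists k; split => //; lia.
    have -> : v = V.+1 by lia.
    have [k [Hk Hk2]] := HK2 b Hb1 Hb2; exists k; split => //; lia.
  exists K1 => v Hv1 Hv2; apply: HK1 => //; lia.
have [K HK] := Hv M.
exists K => b Hb1 Hb2.
have Hb : b = upd (upd b n 0) n (b n).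
  apply: functional_extensionality => j; rewrite /upd; case: eqP => [->|] //.
have := HK (b n) (Hb1 n (ltnSn n)) (Hb1 n (ltnSn n)) (upd b n 0).
case.
- move=> j Hj; rewrite /upd; case: eqP => Hjn; first by lia.
  by apply: Hb1; lia.
- move=> j Hj; rewrite /upd; case: eqP => Hjn //; apply: Hb2; lia.
- by move=> k Hk; rewrite -Hb in Hk; exists k.
Qed.

Lemma stab n : forall P : (nat -> nat) -> Prop,
  (forall a b, leF a b -> P a -> P b) ->
  (forall a b, (forall j, j < n -> a j = b j) -> P a -> P b) ->
  exists M, forall a, P a -> P (clamp a M).
Proof.
elim: n => [|n IH] P Hmono Hdep.
  by exists 0 => a; apply: Hdep => j; lia.
pose Q a := exists k, P (upd a n k).
have HQmono : forall a b, leF a b -> Q a -> Q b.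
  move=> a b Hab [k Hk]; exists k; apply: Hmono Hk => j; rewrite /upd; case: eqP => //.
have HQdep : forall a b, (forall j, j < n -> a j = b j) -> Q a -> Q b.
  move=> a b Hab [k Hk]; exists k; apply: Hdep Hk => j Hj; rewrite /upd; case: eqP => // Hjn.
  apply: Hab; lia.
have [MQ HMQ] := IH Q HQmono HQdep.
have [K HK] := @FM n MQ (fun b k => Q b -> P (upd b n k))
  (fun b _ _ => match classic (Q b) with
                | or_introl Hq => let: ex_intro k Hk := Hq in ex_intro _ k (fun _ => Hk)
                | or_intror Hq => ex_intro _ 0 (fun H' => False_ind _ (Hq H'))
                end).
have Fact1 : forall a, Q a -> P (upd a n K).
  move=> a Qa.
  pose b' := fun j => if j < n then minn (a j) MQ else 0.
  have Qb' : Q b'.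
    apply: HQdep (HMQ a Qa) => j Hj; rewrite /b' /clamp Hj //.
  have [k [Hk Hk2]] := HK b' (fun j Hj => ltac:(rewrite /b' Hj; exact: geq_minr))
    (fun j Hj => ltac:(rewrite /b' ifF //; apply/negbTE; rewrite -leqNgt //)).
  apply: Hmono (Hk2 Qb') => j; rewrite /upd /b'; case: eqP => // _.
  case: ifP => _ //; exact: geq_minl.
have Hsl : forall K', exists M', forall k, k <= K' -> forall a,
    P (upd a n k) -> P (upd (clamp a M') n k).
  have Hsl1 : forall k, exists M', forall a, P (upd a n k) -> P (upd (clamp a M') n k).
    move=> k.
    have Hm1 : forall a b, leF a b -> P (upd a n k) -> P (upd b n k).
      move=> a b Hab; apply: Hmono => j; rewrite /upd; case: eqP => //.
    have Hd1 : forall a b, (forall j, j < n -> a j = b j) -> P (upd a n k) -> P (upd b n k).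
      move=> a b Hab; apply: Hdep => j Hj; rewrite /upd; case: eqP => // Hjn.
      apply: Hab; lia.
    have [M1 HM1] := IH (fun a => P (upd a n k)) Hm1 Hd1.
    by exists M1.
  elim => [|K' [M1 HM1]].
    have [M0 HM0] := Hsl1 0; exists M0 => k Hk; have -> : k = 0 by lia.
    exact: HM0.
  have [M2 HM2] := Hsl1 K'.+1.
  exists (maxn M1 M2) => k Hk a Ha.
  case: (leqP k K') => HkK.
    apply: Hmono (HM1 k HkK a Ha) => j; rewrite /upd /clamp; case: eqP => // _.
    lia.
  have Ek : k = K'.+1 by lia.
  rewrite Ek in Ha *.
  apply: Hmono (HM2 a Ha) => j; rewrite /upd /clamp; case: eqP => // _.
  lia.
have [M' HM'] := Hsl K.
exists (maxn K M') => a Pa.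
have Ea : a = upd a n (a n).
  apply: functional_extensionality => j; rewrite /upd; case: eqP => [->|] //.
case: (ltnP (a n) K) => HaK.
  rewrite Ea in Pa.
  apply: Hmono (HM' (a n) (ltnW HaK) a Pa) => j; rewrite /upd /clamp; case: eqP => [->|_].
    lia.
  lia.
have Qa : Q a by exists (a n); rewrite -Ea.
apply: Hmono (HM' K (leqnn K) a (Fact1 a Qa)) => j; rewrite /upd /clamp; case: eqP => [->|_].
  lia.
lia.
Qed.

End Stab.

Section Final.
Variable n : nat.
Variable I : expv n -> Prop.
Variable d : expv n.
Hypothesis dpos : forall i, 0 < d i.
Hypothesis Imu : forall i, I (powV i (d i)).
Hypothesis goodI : forall l, 0 < l -> forall m, mingen (powI I l) m ->
    exists a : expv n, sumV a = l.-1 /\ inbox d a m.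

Lemma mono_step (P : expv n -> Prop) : (forall a i, P a -> P (addV a (eV i))) ->
  forall a b, leV a b -> P a -> P b.
Proof.
move=> Hst a b; move: {2}(sumV b) (leqnn (sumV b)) => N.
elim: N a b => [|N IH] a b Hs Hab Pa.
  have -> : b = a; last by [].
  apply: leV_anti => // i; have : b i <= 0; last by lia.
  apply: leq_trans Hs; by rewrite /sumV (bigD1 i) //= leq_addr.
case: (classic (forall i, b i <= a i)) => [H|].
  by have -> : b = a by apply: leV_anti.
move=> /not_all_ex_not [i Hi]; move/negP: Hi; rewrite -ltnNge => Hi.
pose b' : expv n := fun j => b j - (j == i).
have Hbb : b = addV b' (eV i).
  apply: functional_extensionality => j; rewrite /addV /b' /eV.
  case: (eqVneq j i) => [->|_] /=; lia.
have Hs' : sumV b' < sumV b by rewrite Hbb sumV_addE.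
rewrite Hbb; apply: Hst; apply: IH Pa.
- lia.
- move=> j; rewrite /b'; case: (eqVneq j i) => [->|_] /=; first by lia.
  rewrite subn0; exact: Hab.
Qed.

Lemma Ia_mono a b t : leV a b -> Ia I d a t -> Ia I d b t.
Proof.
move=> Hab; apply: (mono_step (P := fun a => Ia I d a t)) Hab => a' i.
exact: Ia_step.
Qed.

Lemma Ia_box a c : Ia I d a c <-> Ia I d a (fun i => minn (c i) (d i)).
Proof.
split; case=> m [Hb [Hm Hle]]; exists m; split => //; split => // i.
- have := Hle i; case/andP: (Hb i) => _ H2; rewrite mulSn in H2; lia.
- apply: leq_trans (Hle i) _; exact: geq_minl.
Qed.

Definition ext (a : expv n) : nat -> nat := fun j => oapp a 0 (insub j).
Definition res (f : nat -> nat) : expv n := fun i => f i.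
Definition clampV (a : expv n) M : expv n := fun i => minn (a i) M.

Lemma ext_val (a : expv n) (i : 'I_n) : ext a i = a i.
Proof. by rewrite /ext valK. Qed.

Lemma res_ext a : res (ext a) = a.
Proof. apply: functional_extensionality => i; exact: ext_val. Qed.

Lemma stabV (P : expv n -> Prop) : (forall a b, leV a b -> P a -> P b) ->
  exists M, forall a, P a -> P (clampV a M).
Proof.
move=> Hm.
have H1 : forall a b, leF a b -> P (res a) -> P (res b).
  by move=> a b Hab; apply: Hm => i; exact: Hab.
have H2 : forall a b, (forall j, j < n -> a j = b j) -> P (res a) -> P (res b).
  move=> a b Hab; have -> : res a = res b; last by [].
  apply: functional_extensionality => i; rewrite /res; apply: Hab; exact: ltn_ord.
have [M HM] := @stab n (fun f => P (res f)) H1 H2.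
exists M => a Pa.
have := HM (ext a); rewrite res_ext => /(_ Pa).
have -> : res (clamp (ext a) M) = clampV a M; last by [].
by apply: functional_extensionality => i; rewrite /res /clamp ext_val.
Qed.

Lemma unif : exists M, forall a t, Ia I d a t -> Ia I d (clampV a M) t.
Proof.
pose Dm := sumV d.
have [K HK] := @FM n Dm (fun b M => forall a, Ia I d a (res b) -> Ia I d (clampV a M) (res b))
  (fun b _ _ => stabV (P := fun a => Ia I d a (res b)) (fun a a' Ha => @Ia_mono a a' _ Ha)).
exists K => a t Hat.
pose tb : expv n := fun i => minn (t i) (d i).
have Htb : Ia I d a tb by move/Ia_box: Hat.
have Hc1 : forall j, j < n -> ext tb j <= Dm.
  move=> j Hj; rewrite /ext; case: insubP => [i _ Hi|] //=.
  rewrite /tb; apply: leq_trans (geq_minr _ _) _.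
  by rewrite /Dm /sumV (bigD1 i) //= leq_addr.
have Hc2 : forall j, n <= j -> ext tb j = 0.
  move=> j Hj; rewrite /ext; case: insubP => [i _ Hi|] //=.
  change (nat_of_ord i = j) in Hi; have := ltn_ord i; lia.
have [M [HMK HM]] := HK (ext tb) Hc1 Hc2.
rewrite res_ext in HM.
have := HM a Htb => /(Ia_mono (b := clampV a K)) H.
apply/Ia_box; apply: H => i; rewrite /clampV; lia.
Qed.


End Final.

Theorem mainTheorem8 (n : nat) (I : expv n -> Prop) (d : expv n) :
  good I d ->
  exists (k : nat) (v : 'I_k -> expv n) (S : 'I_k -> {set 'I_n}),
    (forall j j' : 'I_k, j <> j' ->
       forall c, ~ (cone (v j) (S j) c /\ cone (v j') (S j') c)) /\
    (forall c : expv n, exists j : 'I_k, cone (v j) (S j) c) /\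
    (forall (j : 'I_k) (a b : expv n), cone (v j) (S j) a -> cone (v j) (S j) b ->
       forall c, Ia I d a c <-> Ia I d b c).
Proof.
case=> _ [Hgen goodI].
have dpos : forall i, 0 < d i by move=> i; case: (Hgen i).
have Imu : forall i, I (powV i (d i)) by move=> i; case: (Hgen i) => _ [].
have [M HM] := unif dpos Imu goodI.
pose T := {ffun 'I_n -> 'I_M.+1}.
pose v := fun (j : 'I_#|T|) => (fun i => nat_of_ord (@enum_val T _ j i)) : expv n.
pose S := fun (j : 'I_#|T|) => [set i | @enum_val T _ j i < M].
have Hcv : forall j c, cone (v j) (S j) c -> forall i, v j i = minn (c i) M.
  move=> j c Hc i; have [H1 H2] := Hc i; move: H1 H2; rewrite /S inE.
  have := ltn_ord (@enum_val T _ j i); rewrite /v => HM1.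
  case: (ltnP (@enum_val T _ j i) M) => Hlt H1 H2.
    rewrite H1 //; lia.
  have := H2 isT; lia.
exists #|T|, v, S; split; last split.
- move=> j j' Hjj' c [Hc Hc']; apply: Hjj'; apply: enum_val_inj.
  apply/ffunP => i; apply: val_inj => /=.
  have := Hcv j c Hc i; have := Hcv j' c Hc' i; rewrite /v => -> -> //.
- move=> c.
  pose u : T := [ffun i => inord (minn (c i) M)].
  exists (enum_rank u) => i; rewrite /S /v inE enum_rankK /u ffunE inordK; last by lia.
  split => H; lia.
- move=> j a b Ha Hb c.
  have Eab : clampV a M = clampV b M.
    apply: functional_extensionality => i; rewrite /clampV -(Hcv j a Ha) -(Hcv j b Hb) //.
  have Hclamp : forall x : expv n, leV (clampV x M) x.
    move=> y; rewrite /leV => q; rewrite /clampV; exact: geq_minl.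
  split => H.
  - apply: (Ia_mono dpos Imu goodI (Hclamp b)); rewrite -Eab; exact: HM.
  - apply: (Ia_mono dpos Imu goodI (Hclamp a)); rewrite Eab; exact: HM.
Qed.
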